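(* Let $n\ge3$ and let $t\ge0$ be an integer with $r_t=1$. Then $\mathcal{L}_t=\{x_1^{t+1}\partial_n\}$.
   Context: Fix an integer $n\ge 3$. A partition is a sequence $\Lambda=(\lambda_j)_{j\ge1}$ of non-negative integers with finite support; $\mathrm{wt}(\Lambda)=\sum_j j\lambda_j$; $\mathrm{Part}(k)$ is the set of partitions with $\lambda_j=0$ for $j>k$. Write $x^\Lambda=\prod_j x_j^{\lambda_j}$, $\deg(x^\Lambda)=\sum_j\lambda_j$. $\mathcal{B}=\{x^\Lambda\partial_k : 1\le k\le n,\ \Lambda\in\mathrm{Part}(k-1)\}$. For an integer $i\ge-1$, let $r_i\in\{1,\dots,n-1\}$ with $i\equiv r_i\pmod{n-1}$ and $h_i=\lfloor (i-1)/(n-1)\rfloor+1$. Define $\mathrm{WD}(x^\Lambda\partial_k)=\mathrm{wt}(\Lambda)-\deg(x^\Lambda)+n-k$ and $\mathrm{lev}_i(x^\Lambda\partial_k)=h_i\,\mathrm{WD}(x^\Lambda\partial_k)+\deg(x^\Lambda)-1$. For $i\ge-1$, $\mathcal{N}_i=\{b\in\mathcal{B}: \mathrm{lev}_j(b)\le j\text{ for some integer } -1\le j\le i\}$, and $\mathcal{L}_i=\mathcal{N}_i\setminus\mathcal{N}_{i-1}$ for $i\ge0$. *)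

(* Defs.v *)
From mathcomp Require Import all_boot all_order all_algebra.
Set Implicit Arguments. Unset Strict Implicit. Unset Printing Implicit Defensive.
Import Order.TTheory GRing.Theory Num.Theory.
Local Open Scope ring_scope.

(* A basis element x^Lambda d_k with Lambda in Part(k-1) is encoded as the pair
   (k, lam) where lam = [:: lambda_1; ...; lambda_(k-1)]  (lam`_(j-1) = lambda_j).
   Since lambda_j = 0 for j > k-1, this encoding is faithful and injective. *)
Definition bvec := (nat * seq nat)%type.

Definition inB (n : nat) (b : bvec) : Prop :=
  [/\ (1 <= b.1)%N, (b.1 <= n)%N & size b.2 = (b.1 - 1)%N].

Definition wt (lam : seq nat) : nat :=
  \sum_(i < size lam) (i.+1 * nth 0%N lam i)%N.

Definition degx (lam : seq nat) : nat := sumn lam.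

(* r_i in {1,...,n-1} with i = r_i mod (n-1) *)
Definition r_ (n : nat) (i : int) : int := ((i - 1) %% (n.-1)%:Z)%Z + 1.

Definition h_ (n : nat) (i : int) : int := ((i - 1) %/ (n.-1)%:Z)%Z + 1.

Definition WD (n : nat) (b : bvec) : int :=
  (wt b.2)%:Z - (degx b.2)%:Z + n%:Z - (b.1)%:Z.

Definition lev (n : nat) (i : int) (b : bvec) : int :=
  h_ n i * WD n b + (degx b.2)%:Z - 1.

Definition inN (n : nat) (i : int) (b : bvec) : Prop :=
  inB n b /\ exists j : int, -1 <= j /\ j <= i /\ lev n j b <= j.

Definition inL (n : nat) (i : int) (b : bvec) : Prop :=
  inN n i b /\ ~ inN n (i - 1) b.

Definition x1pow_dn (n t : nat) : bvec := (n, (t.+1) :: nseq (n - 2) 0%N).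

(* Main.v *)
Require Import Defs.
From mathcomp Require Import all_boot all_order all_algebra zify ring.
Import Order.TTheory GRing.Theory Num.Theory.
Local Open Scope ring_scope.

Lemma sum_nth (l : seq nat) : (\sum_(i < size l) nth 0%N l i)%N = sumn l.
Proof.
elim: l => [|y l IH]; first by rewrite big_ord0.
by rewrite big_ord_recl /= -IH.
Qed.

Lemma wt_cons x l : wt (x :: l) = (x + wt l + sumn l)%N.
Proof.
rewrite /wt /= big_ord_recl /= mul1n -sum_nth -addnA -big_split /=.
congr (_ + _)%N; apply: eq_bigr => i _; by rewrite mulSn addnC.
Qed.

Lemma wt_ge l : (sumn l <= wt l)%N.
Proof.
elim: l => [|x l IH]; first by rewrite /wt big_ord0.
rewrite wt_cons /=; lia.
Qed.

Lemma wt_nseq k : wt (nseq k 0%N) = 0%N.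
Proof. elim: k => [|k IH]; first by rewrite /wt big_ord0.
by rewrite /= wt_cons IH /=; elim: k {IH}.
Qed.

Lemma sumn_nseq0 k : sumn (nseq k 0%N) = 0%N.
Proof. by elim: k. Qed.

Lemma WD_ge0 n b : (3 <= n)%N -> inB n b -> 0 <= WD n b.
Proof.
move=> hn; case: b => k [|x l] [/= h1 h2 hs]; rewrite /WD /degx /=.
  rewrite /wt big_ord0 /=; lia.
rewrite wt_cons; have := wt_ge l; lia.
Qed.

Lemma WD_eq0 n b : (3 <= n)%N -> inB n b -> WD n b = 0 ->
  b = (n, (degx b.2) :: nseq (n - 2) 0%N).
Proof.
move=> hn; case: b => k [|x l] [/= h1 h2 hs]; rewrite /WD /degx /=.
  rewrite /wt big_ord0 /=; lia.
rewrite wt_cons => H.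
have := wt_ge l => H2.
have wl0 : wt l = 0%N by lia.
have kn : k = n by lia.
have sl0 : sumn l = 0%N by lia.
move/eqP/natnseq0P: sl0 => ->.
rewrite sumn_nseq0 addn0 kn.
have -> : size l = (n - 2)%N by lia.
by [].
Qed.
Lemma h_pred n (t : int) : (3 <= n)%N -> r_ n t = 1 -> h_ n (t - 1) = h_ n t - 1.
Proof.
rewrite /r_ /h_ => hn hr.
have r0 : ((t - 1) %% (n.-1)%:Z)%Z = 0 by lia.
have e := divz_eq (t - 1) (n.-1)%:Z.
rewrite r0 addr0 in e.
set Q := ((t - 1) %/ (n.-1)%:Z)%Z in e *.
have -> : t - 1 - 1 = (Q - 1) * (n.-1)%:Z + ((n.-1)%:Z - 1).
  rewrite mulrBl mul1r -e; ring.
rewrite divzMDl; last by apply/eqP; lia.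
rewrite divz_small; first ring.
apply/andP; split; lia.
Qed.

Theorem corollary2p10 (n t : nat) (hn : (3 <= n)%N) (ht : r_ n t%:Z = 1) :
  forall b : bvec, inL n t%:Z b <-> b = x1pow_dn n t.
Proof.
move=> b; split.
- move=> [[hB [j [hj1 [hjt hlev]]]] hnot].
  have hW := WD_ge0 n b hn hB.
  case: (WD n b =P 0) => [W0|W0].
  + have hl : forall i, lev n i b = (degx b.2)%:Z - 1.
      by move=> i; rewrite /lev W0 mulr0 add0r.
    have hno : ~ ((degx b.2)%:Z - 1 <= t%:Z - 1).
      move=> h; apply: hnot; split=> //; exists (t%:Z - 1); rewrite hl.
      split; first lia. split; first lia. exact: h.
    rewrite hl in hlev.
    have hd : degx b.2 = t.+1 by lia.
    by rewrite (WD_eq0 n b hn hB W0) hd.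
  + exfalso; case: (boolP (j <= t%:Z - 1)) => hj.
      by apply: hnot; split=> //; exists j.
    have ejt : j = t%:Z by lia.
    rewrite ejt in hlev.
    apply: hnot; split=> //; exists (t%:Z - 1).
    split; first lia. split; first lia.
    move: hlev; rewrite /lev h_pred // mulrBl mul1r.
    have : WD n b != 0 by apply/eqP.
    move: hW; set W := WD n b; set H := h_ n t%:Z; set P := H * W.
    lia.
- move=> ->.
  have hW : WD n (x1pow_dn n t) = 0.
    rewrite /WD /x1pow_dn /= wt_cons wt_nseq /degx /= sumn_nseq0; lia.
  have hl : forall i, lev n i (x1pow_dn n t) = t%:Z.
    move=> i; rewrite /lev hW mulr0 add0r /degx /x1pow_dn /= sumn_nseq0; lia.
  split.
    split; first by split; rewrite /= ?size_nseq; lia.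
    by exists t%:Z; rewrite hl; split; lia.
  by move=> [_ [j [h1 [h2 h3]]]]; rewrite hl in h3; lia.
Qed.
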